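(* Let $k$, $a$, $b$, $\ell$ be positive integers with $k = a\ell$ and $a \le b$. Let $P = b\ast[0,\ell-1] = \{0,b,2b,\ldots,(\ell-1)b\}$ and \[ A = P + [0,a-1] = \bigcup_{j=1}^{\ell}\big((j-1)b + [0,a-1]\big). \] Then $|A| = k$. Moreover, for every positive integer $h$, letting $Q = b\ast[0,h(\ell-1)] = \{0,b,2b,\ldots,h(\ell-1)b\}$, we have \[ hA = Q + [0,h(a-1)] \] and \[ |hA| = \begin{cases} (a + b(\ell-1) - 1)h + 1 & \text{if } a \le b \le (a-1)h+1, \\ (a-1)(\ell-1)h^2 + (a+\ell-2)h + 1 & \text{if } b \ge h(a-1)+1. \end{cases} \]
   Context: For real numbers $u,v$, the integer interval $[u,v]$ denotes $\{n \in \mathbf{Z} : u \le n \le v\}$. For a set $X$ of integers and an integer $\lambda$, $\lambda\ast X = \{\lambda x : x \in X\}$; for sets $X,Y$, $X+Y = \{x+y : x\in X, y \in Y\}$. For a positive integer $h$ and a finite set $A$ of integers, the $h$-fold sumset $hA$ is the set of all sums $a_1+\cdots+a_h$ with $a_1,\ldots,a_h \in A$ (not necessarily distinct). *)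

(* Defs.v *)
From HB Require Import structures.
From mathcomp Require Import all_boot all_order all_algebra.
From mathcomp Require Import finmap.
Set Implicit Arguments. Unset Strict Implicit. Unset Printing Implicit Defensive.
Import Order.TTheory GRing.Theory Num.Theory.
Local Open Scope ring_scope.
Local Open Scope fset_scope.

Definition iint (u v : int) : {fset int} :=
  [fset x in [seq (u + i%:Z)%R | i <- iota 0 `|(v - u + 1)%R|%N] | ((u <= x) && (x <= v))%R].

Definition dilate (lam : int) (X : {fset int}) : {fset int} :=
  [fset (lam * x)%R | x in X].

Definition sumset (X Y : {fset int}) : {fset int} :=
  [fset (x + y)%R | x in X, y in Y].

Definition hfold (h : nat) (A : {fset int}) : {fset int} :=
  [fset (\sum_(i < h) val (f i))%R | f : {ffun 'I_h -> A} in {: {ffun 'I_h -> A}}].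

(* Main.v *)
Require Import Defs.
From HB Require Import structures.
From mathcomp Require Import all_boot all_order all_algebra.
From mathcomp Require Import finmap zify.
Import Order.TTheory GRing.Theory Num.Theory.
Local Open Scope fset_scope.
Section Helpers.
Local Open Scope ring_scope.

Lemma in_iint (u v x : int) : (x \in iint u v) = ((u <= x) && (x <= v))%R.
Proof.
rewrite /iint !inE andbC; case: (boolP ((u <= x) && (x <= v))%R) => //= /andP[H1 H2].
apply/mapP; exists `|(x - u)%R|%N; first by rewrite mem_iota; lia.
lia.
Qed.

Lemma in_dilate lam X x : reflect (exists2 y, y \in X & x = (lam * y)%R) (x \in dilate lam X).
Proof. exact: imfsetP. Qed.

Lemma in_sumset X Y x : reflect (exists2 y, y \in X & exists2 z, z \in Y & x = (y + z)%R) (x \in sumset X Y).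
Proof. exact: imfset2P. Qed.

Lemma test (h l : nat) : (0 < l)%N -> (h%:Z * (l%:Z - 1))%R = (h * (l - 1))%N%:Z.
Proof. move=> *. nia. Qed.
Definition S (b M N : nat) := sumset (dilate b%:Z (iint 0 M%:Z)) (iint 0 N%:Z).

Lemma in_S b M N x : x \in S b M N <-> exists j r : nat, [/\ (j <= M)%N, (r <= N)%N & x = (b*j + r)%N%:Z].
Proof.
split.
- case/in_sumset => y /in_dilate [j' Hj' ->] [z Hz ->].
  move: Hj' Hz; rewrite !in_iint => /andP[J1 J2] /andP[Z1 Z2].
  exists `|j'|%N, `|z|%N; split; [lia|lia|nia].
- case=> j [r [Hj Hr ->]]; apply/in_sumset; exists (b%:Z * j%:Z).
    by apply/in_dilate; exists j%:Z => //; rewrite in_iint; lia.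
  by exists r%:Z; [rewrite in_iint; lia | lia].
Qed.

Lemma card_seq (X : {fset int}) (s : seq nat) : uniq s ->
  (forall x, x \in X <-> exists2 n, n \in s & x = n%:Z) -> #|` X| = size s.
Proof.
move=> Us HX; have -> : X = [fset x in map Posz s].
  apply/fsetP => x; rewrite inE; apply/idP/idP.
    by case/HX => n ns ->; rewrite mem_map //; move=> ? ? [].
  by case/mapP => n ns ->; apply/HX; exists n.
by rewrite card_fseq undup_id ?size_map // map_inj_uniq // => ? ? [].
Qed.

Lemma card_S_disj b M N : (N < b)%N -> #|` S b M N| = ((M.+1) * (N.+1))%N.
Proof.
move=> Nb.
have bpos : (0 < b)%N by lia.
have key : forall j r, (r < b)%N -> ((b * j + r) %/ b = j /\ (b * j + r) %% b = r)%N.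
  move=> j r rb; rewrite mulnC divnMDl // modnMDl divn_small // modn_small //; lia.
rewrite (@card_seq _ [seq (b * j + r)%N | j <- iota 0 M.+1, r <- iota 0 N.+1]).
- by rewrite size_allpairs !size_iota.
- apply: allpairs_uniq; rewrite ?iota_uniq //.
  move=> [j1 r1] [j2 r2] HA HB.
  case/allpairsP: HA => [[j3 r3] [_ H2 [-> ->]]].
  case/allpairsP: HB => [[j4 r4] [_ H4 [-> ->]]].
  rewrite !mem_iota /= in H2 H4; move=> /= E.
  have [E1 E2] := key j3 r3 ltac:(lia); have [E3 E4] := key j4 r4 ltac:(lia).
  by congr pair; [rewrite -E1 E E3 | rewrite -E2 E E4].
- move=> x; rewrite in_S; split.
  + case=> j [r [Hj Hr ->]]; exists (b * j + r)%N => //.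
    apply/allpairsP; exists (j, r); split => //; rewrite mem_iota /=; lia.
  + case=> n /allpairsP [[j r] []]; rewrite !mem_iota /= => H1 H2 -> ->.
    exists j, r; split => //; lia.
Qed.

Lemma card_S_int b M N : (0 < b)%N -> (b <= N.+1)%N -> #|` S b M N| = (b * M + N).+1.
Proof.
move=> bpos bN.
rewrite (@card_seq _ (iota 0 (b * M + N).+1)) ?size_iota ?iota_uniq //.
move=> x; rewrite in_S; split.
- case=> j [r [Hj Hr ->]]; exists (b * j + r)%N => //; rewrite mem_iota; nia.
- case=> n; rewrite mem_iota => Hn ->.
  have E := divn_eq n b; have Hm := ltn_pmod n bpos.
  case: (leqP (n %/ b) M) => Hd.
    exists (n %/ b)%N, (n %% b)%N; split => //; [lia | lia].
  have : (M.+1 * b <= n)%N by rewrite -leq_divRL.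
  move=> H; exists M, (n - b * M)%N; split => //; nia.
Qed.
Lemma Posz_sum h (F : 'I_h -> nat) : ((\sum_(i < h) F i)%N)%:Z = \sum_(i < h) (F i)%:Z.
Proof. by elim/big_rec2: _ => // i x y _ <-. Qed.

Lemma decomp h m J : (J <= h * m)%N ->
  exists g : nat -> nat, (forall i, g i <= m)%N /\ (\sum_(i < h) g i)%N = J.
Proof.
elim: h J => [|h IH] J HJ.
  by exists (fun _ => 0%N); split => //; rewrite big_ord0; lia.
have [g [Hg Hs]] := IH (J - minn J m)%N ltac:(lia).
exists (fun i => if i == h then minn J m else g i); split.
  by move=> i; case: eqP => _ //; lia.
rewrite big_ord_recr /= eqxx.
rewrite (eq_bigr (fun i : 'I_h => g i)); first by rewrite Hs; lia.
by move=> i _; rewrite /= ltn_eqF.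
Qed.

Lemma hfold_S b M N h : hfold h (S b M N) = S b (h * M) (h * N).
Proof.
apply/fsetP => x; apply/idP/idP.
- case/imfsetP => f _ ->.
  have: forall i, exists p : nat * nat,
      [/\ (p.1 <= M)%N, (p.2 <= N)%N & val (f i) = (b * p.1 + p.2)%N%:Z].
    move=> i; have := valP (f i); case/in_S => j [r [Hj Hr E]].
    by exists (j, r).
  case/fin_all_exists => u Hu.
  apply/in_S; exists (\sum_(i < h) (u i).1)%N, (\sum_(i < h) (u i).2)%N; split.
  + apply: (@leq_trans (\sum_(i < h) M)%N); last by rewrite sum_nat_const card_ord.
    by apply: leq_sum => i _; case: (Hu i).
  + apply: (@leq_trans (\sum_(i < h) N)%N); last by rewrite sum_nat_const card_ord.
    by apply: leq_sum => i _; case: (Hu i).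
  + rewrite (eq_bigr (fun i => (b * (u i).1 + (u i).2)%N%:Z)); last by move=> i _; case: (Hu i).
    by rewrite -Posz_sum big_split /= big_distrr.
- case/in_S => j [r [Hj Hr ->]].
  have [g1 [Hg1 S1]] := decomp _ _ _ Hj.
  have [g2 [Hg2 S2]] := decomp _ _ _ Hr.
  have H : forall i : 'I_h, (b * g1 i + g2 i)%N%:Z \in S b M N.
    by move=> i; apply/in_S; exists (g1 i), (g2 i).
  apply/imfsetP; exists [ffun i : 'I_h => (FSetSub (H i) : S b M N)] => //.
  rewrite (eq_bigr (fun i : 'I_h => (b * g1 i + g2 i)%N%:Z)); last by move=> i _; rewrite ffunE SubK.
  by rewrite -Posz_sum big_split /= -big_distrr S1 S2.
Qed.
End Helpers.

Theorem mainTheorem2 (k a b l : nat) :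
  (0 < k)%N -> (0 < a)%N -> (0 < b)%N -> (0 < l)%N ->
  k = (a * l)%N -> (a <= b)%N ->
  let P := dilate (b%:Z) (iint 0 (l%:Z - 1)%R) in
  let A := sumset P (iint 0 (a%:Z - 1)%R) in
  #|` A| = k /\
  (forall h : nat, (0 < h)%N ->
     let Q := dilate (b%:Z) (iint 0 (h%:Z * (l%:Z - 1))%R) in
     hfold h A = sumset Q (iint 0 (h%:Z * (a%:Z - 1))%R) /\
     ((a <= b <= (a - 1) * h + 1)%N ->
        #|` hfold h A| = ((a + b * (l - 1) - 1) * h + 1)%N) /\
     ((h * (a - 1) + 1 <= b)%N ->
        #|` hfold h A| = ((a - 1) * (l - 1) * h ^ 2 + (a + l - 2) * h + 1)%N)).
Proof.
move=> kp ap bp lp -> ab P A.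
have E1 : (l%:Z - 1)%R = ((l - 1)%N%:Z)%R by lia.
have E2 : (a%:Z - 1)%R = ((a - 1)%N%:Z)%R by lia.
have EA : A = S b (l - 1) (a - 1) by rewrite /A /P E1 E2.
split.
  by rewrite EA card_S_disj; lia.
move=> h hp Q.
have E3 : (h%:Z * (l%:Z - 1))%R = ((h * (l - 1))%N%:Z)%R by nia.
have E4 : (h%:Z * (a%:Z - 1))%R = ((h * (a - 1))%N%:Z)%R by nia.
have EH : hfold h A = S b (h * (l - 1)) (h * (a - 1)) by rewrite EA hfold_S.
split; first by rewrite EH /Q E3 E4.
split.
  move=> /andP[_ H]; rewrite EH card_S_int //; last by lia.
  nia.
move=> H; rewrite EH card_S_disj; last by lia.
nia.
Qed.
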